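(* Let $n\ge2$, $y\in\{1,\dots,n-1\}$, $L_b=n-y+1$, and $0\le a<1$. Let $A\in\mathbb{R}^{n\times n}$ be the stem-bud network with all edge weights equal to $a$, i.e., $a_{q+1,q}=a$ for $q=1,\dots,n-1$, $a_{yn}=a$, and all other entries zero, and consider the single input $B=e_1$ and time horizon $T$ (a positive integer). Then: (i) if $w>0$ is added to the weight of a single edge of the bud (one of the edges $q\to q+1$ with $y\le q\le n-1$, or $n\to y$), the modified network has spectral radius less than $1$ provided $0<w<\frac{1-a^{L_b}}{a^{L_b-1}}$ (with no upper restriction if $a=0$); (ii) $\operatorname{tr}(\mathcal{W}_A)\le\sum_{k=0}^{y-2}a^{2k}+\sum_{k=y-1}^{n-1}\frac{a^{2k}}{(1-a^{L_b})^2}$, where $\mathcal{W}_A=\sum_{t=0}^{T-1}A^te_1e_1^{\top}(A^t)^{\top}$.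
   Context: $e_k$ is the $k$-th canonical unit vector; $a_{pq}$ is the weight of edge $q\to p$; the bud of the stem-bud network is the cycle $y\to y+1\to\cdots\to n\to y$, of length $L_b$. *)

(* Defs.v *)
From HB Require Import structures.
From mathcomp Require Import all_boot all_order all_algebra.
From mathcomp Require Import complex.
Set Implicit Arguments. Unset Strict Implicit. Unset Printing Implicit Defensive.
Import Order.TTheory GRing.Theory Num.Theory.
Local Open Scope ring_scope.

Definition eigenvaluesC (R : rcfType) (n : nat) (A : 'M[R]_n) : seq R[i] :=
  sval (closed_field_poly_normal (char_poly (map_mx (fun x : R => (x%:C)%C) A))).

Definition spectral_radius (R : rcfType) (n : nat) (A : 'M[R]_n) : R :=
  \big[Num.max/0]_(z <- eigenvaluesC A) Normc.normc z.

Definition e1 (R : rcfType) (n : nat) : 'cV[R]_n :=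
  \col_(i < n) ((i : nat) == 0%N)%:R.

(* Stem-bud network on nodes 1..n (0-based: 0..n-1), all edge weights a:
   edges q -> q+1 (q = 1..n-1) and n -> y.  Entry A p q is the weight of
   edge q -> p. *)
Definition stem_bud (R : rcfType) (n y : nat) (a : R) : 'M[R]_n :=
  \matrix_(p < n, q < n)
    (if ((p : nat) == q.+1) || (((p : nat) == y.-1) && ((q : nat) == n.-1))
     then a else 0).

(* (p, q) (0-based) is an edge q -> p of the bud y -> y+1 -> ... -> n -> y. *)
Definition bud_edge (n y : nat) (p q : nat) : bool :=
  (((p == q.+1) && (y.-1 <= q) && (q < n.-1)) || ((p == y.-1) && (q == n.-1)))%N.

Definition gramian_e1 (R : rcfType) (n : nat) (A : 'M[R]_n) (T : nat) : 'M[R]_n :=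
  \sum_(t < T) (A ^+ t *m e1 R n *m (e1 R n)^T *m (A ^+ t)^T).

(* Main.v *)
Require Import Defs.
From HB Require Import structures.
From mathcomp Require Import all_boot all_order all_algebra.
From mathcomp Require Import complex ring lra zify.
Import Order.TTheory GRing.Theory Num.Theory.
Local Open Scope ring_scope.

Definition succ {m : nat} (y : nat) (q : 'I_m.+1) : 'I_m.+1 :=
  if (q < m)%N then inord q.+1 else inord y.-1.

Lemma succ_val m y (q : 'I_m.+1) : (y <= m)%N ->
  (succ y q : nat) = if (q < m)%N then q.+1 else y.-1.
Proof.
move=> hy; rewrite /succ; case: ifP => h; rewrite inordK //.
by case: y hy {h} => //= y' hy; rewrite ltnS ltnW.
Qed.

Lemma stem_succ (R : rcfType) m y (a : R) (p q : 'I_m.+1) : (y <= m)%N ->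
  stem_bud m.+1 y a p q = if p == succ y q then a else 0.
Proof.
move=> hy; rewrite mxE /=.
have -> : (p == succ y q) = ((p : nat) == succ y q) by [].
rewrite succ_val //.
case: (ltnP q m) => hq.
  have -> : ((q : nat) == m) = false by apply/negbTE; rewrite neq_ltn hq.
  by rewrite andbF orbF.
have qm : (q : nat) = m by apply/eqP; rewrite eqn_leq -ltnS ltn_ord hq.
have -> : ((p : nat) == q.+1) = false by apply/negbTE; rewrite qm neq_ltn ltn_ord.
by rewrite qm eqxx andbT.
Qed.

Definition ecol (R : rcfType) {m : nat} (j : 'I_m.+1) : 'cV[R]_m.+1 :=
  \col_i ((i == j)%:R).

Lemma A_ecol (R : rcfType) m y (a : R) (j : 'I_m.+1) : (y <= m)%N ->
  stem_bud m.+1 y a *m ecol R j = a *: ecol R (succ y j).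
Proof.
move=> hy; apply/matrixP => i k; rewrite [LHS]mxE [RHS]mxE (bigD1 j) //= big1.
  rewrite stem_succ // [ecol R j j k]mxE [ecol R _ i k]mxE eqxx mulr1 addr0.
  by case: eqP; rewrite ?mulr1 ?mulr0.
by move=> l /negbTE hl; rewrite [ecol R j l k]mxE hl mulr0.
Qed.

Lemma pow_e1 (R : rcfType) m y (a : R) t : (y <= m)%N ->
  (stem_bud m.+1 y a) ^+ t *m e1 R m.+1 = a ^+ t *: ecol R (iter t (succ y) ord0).
Proof.
move=> hy; elim: t => [|t IH].
  rewrite expr0 scale1r mul1mx; apply/matrixP => i k; rewrite !mxE //.
rewrite exprS -mulmxE -mulmxA IH -scalemxAr A_ecol // scalerA -exprSr /=.
by [].
Qed.

Lemma tr_gram (R : rcfType) m y (a : R) T : (y <= m)%N ->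
  \tr (gramian_e1 (stem_bud m.+1 y a) T) = \sum_(t < T) a ^+ (2 * t).
Proof.
move=> hy; rewrite /gramian_e1 raddf_sum; apply: eq_bigr => t _.
rewrite -!mulmxA -trmx_mul mulmxA pow_e1 //.
set u := a ^+ t *: _.
change (\sum_i (u *m u^T) i i = a ^+ (2 * t)).
rewrite (bigD1 (iter t (succ y) ord0)) //= big1.
  rewrite addr0 !mxE big_ord1 !mxE eqxx mulr1 -expr2 -exprM mulnC.
  by [].
move=> i /negbTE hi; rewrite !mxE big_ord1 !mxE hi mulr0 mul0r.
by [].
Qed.
Lemma geo (R : comRingType) (x : R) k : (1 - x) * \sum_(i < k) x ^+ i = 1 - x ^+ k.
Proof.
elim: k => [|k IH]; first by rewrite big_ord0 mulr0 expr0 subrr.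
rewrite big_ord_recr /= mulrDr IH exprS; ring.
Qed.

Lemma alg_ineq (R : realFieldType) (x b c L S1 G : R) :
  0 <= x -> x < 1 -> 0 <= b -> b < 1 -> 0 <= c -> (1 - x) * L <= 1 ->
  (1 - x) * S1 = 1 - c -> (1 - x) * G = 1 - b ^+ 2 ->
  L <= S1 + c * (G / (1 - b) ^+ 2).
Proof.
move=> x0 x1 b0 b1 c0 hL hS hG.
have hb : 0 < 1 - b by lra.
have hq : 1 <= (1 - x) * (G / (1 - b) ^+ 2).
  rewrite mulrA hG.
  have -> : 1 - b ^+ 2 = (1 + b) * (1 - b) by ring.
  rewrite expr2 invfM mulrA -[X in X / _]mulrA divff ?lt0r_neq0 // mulr1.
  by rewrite ler_pdivlMr // mul1r; lra.
move: hq; set q := G / _ => hq.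
have hx : 0 < 1 - x by lra.
suff : (1 - x) * L <= (1 - x) * (S1 + c * q) by rewrite ler_pM2l.
rewrite mulrDr hS mulrCA; nra.
Qed.

Lemma normC_real (R : rcfType) (x : R) : `|(x%:C)%C| = ((`|x|)%:C)%C.
Proof. by rewrite normc_def /= expr0n /= addr0 sqrtr_sqr. Qed.

Lemma eig_cycle (R : rcfType) m y (M : 'M[R]_m.+1) (c : 'I_m.+1 -> R) (z : R[i]) :
  (1 <= y)%N -> (y <= m)%N ->
  (forall p q, M p q = if p == succ y q then c q else 0) ->
  `| \prod_(i < (m - y.-1).+1) c (inord (y.-1 + i)) | < 1 ->
  root (char_poly (map_mx (fun x : R => (x%:C)%C) M)) z -> `|z| < 1.
Proof.
move=> y1 ym hM hP.
rewrite -eigenvalue_root_char => /eigenvalueP [v hv vn0].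
have rel q : z * v 0 q = ((c q)%:C)%C * v 0 (succ y q).
  have := (proj2 (matrixP _ _) hv) 0 q; rewrite !mxE => <-.
  rewrite (bigD1 (succ y q)) //= big1 ?addr0.
    by rewrite !mxE hM eqxx mulrC.
  by move=> p /negbTE hp; rewrite !mxE hM hp rmorph0 mulr0.
set K := (m - y.-1)%N in hP.
have yK : (y.-1 + K = m)%N by rewrite /K; lia.
set f := fun k => v 0 (inord (y.-1 + k)).
have sv k : (k < K)%N -> succ y (inord (y.-1 + k)) = inord (y.-1 + k.+1) :> 'I_m.+1.
  move=> hk; apply/val_inj; rewrite /= succ_val // !inordK; try lia.
  by case: ifP => //; lia.
have sK : succ y (inord (y.-1 + K)) = inord (y.-1) :> 'I_m.+1.
  apply/val_inj; rewrite /= succ_val // !inordK; try lia.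
  by case: ifP => //; lia.
have cyc k : (k <= K)%N ->
    z ^+ k * f 0%N = (\prod_(i < k) ((c (inord (y.-1 + i)))%:C)%C) * f k.
  elim: k => [|k IH] hk; first by rewrite expr0 big_ord0 !mul1r.
  rewrite exprSr -mulrA [z * _]mulrC mulrA IH ?(ltnW hk) // -mulrA.
  rewrite [f k * z]mulrC /f rel sv // big_ord_recr /= mulrA.
  by [].
have hcyc : z ^+ K.+1 * f 0%N = ((\prod_(i < K.+1) c (inord (y.-1 + i)))%:C)%C * f 0%N.
  rewrite exprS -mulrA cyc // mulrCA /f rel sK rmorph_prod big_ord_recr /= -mulrA addn0.
  by [].
change (((Normc.normc z)%:C)%C < ((1:R)%:C)%C); rewrite ltcR ltNge; apply/negP.
move=> hz1; have {hz1} hz1 : 1 <= `|z| by rewrite -(rmorph1 (real_complex R)) lecR.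
have z0 : z != 0 by apply: contraTneq hz1 => ->; rewrite normr0 ler10.
move: hcyc hP; set P := \prod_(i < K.+1) _ => hcyc hP.
have : (z ^+ K.+1 - (P%:C)%C) * f 0%N = 0 by rewrite mulrBl hcyc subrr.
move/eqP; rewrite mulf_eq0 => /orP [/eqP hzP | /eqP f0].
  have := exprn_ege1 K.+1 hz1; rewrite -normrX.
  move/eqP: hzP; rewrite subr_eq0 => /eqP ->; rewrite normC_real.
  by rewrite -(rmorph1 (real_complex R)) lecR leNgt hP.
have back j : (j <= m)%N -> v 0 (inord (m - j)) = 0.
  elim: j => [|j IH] hj.
    have e := sK; rewrite yK in e.
    apply/eqP; rewrite -(mulIr_eq0 _ (mulIf z0)) mulrC subn0 rel e.
    have f0' : v 0 (inord y.-1) = 0 by rewrite -f0 /f addn0.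
    by rewrite f0' mulr0.
  apply/eqP; rewrite -(mulIr_eq0 _ (mulIf z0)) mulrC rel.
  have -> : succ y (inord (m - j.+1)) = inord (m - j) :> 'I_m.+1.
    have h1 : (m - j.+1 < m)%N by lia.
    apply/val_inj; rewrite /= succ_val // !inordK ?ltnS ?leq_subr // h1.
    lia.
  by rewrite IH ?(ltnW hj) // mulr0.
apply/negP: vn0; apply/negPn/eqP/rowP => i; rewrite !mxE.
have := back (m - i)%N (leq_subr _ _).
have im : (i <= m)%N by rewrite -ltnS.
by rewrite subKn // inord_val.
Qed.

Theorem theorem5p6 (R : rcfType) (n y T : nat) (a : R) :
  (2 <= n)%N -> (1 <= y)%N -> (y <= n.-1)%N -> (0 < T)%N ->
  0 <= a -> a < 1 ->
  let Lb := (n - y + 1)%N in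
  let A := stem_bud n y a in
  (* (i) *)
  (forall (p q : 'I_n) (w : R), bud_edge n y p q -> 0 < w ->
     (a != 0 -> w < (1 - a ^+ Lb) / a ^+ Lb.-1) ->
     spectral_radius (A + w *: delta_mx p q) < 1)
  /\
  (* (ii) *)
  \tr (gramian_e1 A T) <=
    \sum_(0 <= k < y.-1) a ^+ (2 * k)
    + \sum_(y.-1 <= k < n) a ^+ (2 * k) / (1 - a ^+ Lb) ^+ 2.
Proof.
case: n => [|m] // n2 y1 ym T0 a0 a1 Lb A; rewrite /= in ym.
have eL : Lb = (m - y.-1).+1 by rewrite /Lb; lia.
split.
  move=> p q w hb w0 hw.
  have [sq qy] : succ y q = p /\ (y.-1 <= q)%N.
    move: hb; rewrite /bud_edge /= => /orP [/andP [/andP [/eqP hp h1] h2] | /andP [/eqP hp /eqP hq]].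
      split => //; apply/val_inj; rewrite /= succ_val // h2 hp //.
    split; last by rewrite hq; lia.
    by apply/val_inj; rewrite /= succ_val // hq ltnn hp.
  set c := fun q' : 'I_m.+1 => a + w * (q' == q)%:R.
  have hM p' q' : (A + w *: delta_mx p q) p' q' = if p' == succ y q' then c q' else 0.
    rewrite [LHS]mxE /A stem_succ // !mxE /c.
    have [eq'|nq] := eqVneq q' q.
      rewrite eq' sq ?eqxx andbT; case: eqP => _; rewrite ?mulr1 ?mulr0 ?addr0 //.
    by rewrite andbF /=; case: eqP => _; rewrite ?mulr0 ?addr0.
  have hy' : (y.-1 + 1 = y)%N by rewrite addn1 prednK.
  set K := (m - y.-1)%N in eL.
  have hK1 : (1 <= K)%N by rewrite /K; lia.
  have i0lt : (q - y.-1 < K.+1)%N by have := ltn_ord q; rewrite /K; lia.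
  have hprod : \prod_(i < K.+1) c (inord (y.-1 + i)) = (a + w) * a ^+ K.
    rewrite (bigD1 (Ordinal i0lt)) //= subnKC // inord_val /c eqxx mulr1.
    congr (_ * _); rewrite (eq_bigr (fun=> a)).
      by rewrite prodr_const cardC1 card_ord.
    move=> i hi; rewrite /c.
    have -> : (inord (y.-1 + i) == q) = false.
      apply/negbTE; apply: contra hi => /eqP hq; apply/eqP/val_inj => /=.
      move: hq => /(congr1 val); rewrite /= inordK; [lia | have := ltn_ord i; lia].
    by rewrite mulr0 addr0.
  have hP : `| \prod_(i < K.+1) c (inord (y.-1 + i)) | < 1.
    rewrite hprod ger0_norm; last by apply: mulr_ge0; [lra | exact: exprn_ge0].
    have [a00|an0] := eqVneq a 0.
      rewrite a00 expr0n; have -> : (K == 0)%N = false by lia.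
      by rewrite mulr0 ltr01.
    have := hw an0; rewrite eL /= => hw'.
    have aK : 0 < a ^+ K by apply: exprn_gt0; rewrite lt0r an0.
    move: hw'; rewrite ltr_pdivlMr // exprS => hw'.
    rewrite mulrDl; lra.
  rewrite /spectral_radius big_seq; apply: (big_ind (fun x : R => x < 1)).
  - exact: ltr01.
  - by move=> x1 x2 h1 h2; rewrite gt_max h1 h2.
  move=> z; rewrite /eigenvaluesC; case: closed_field_poly_normal => r /= hr hz.
  have rz : root (char_poly (map_mx (fun x : R => (x%:C)%C) (A + w *: delta_mx p q))) z.
    rewrite hr rootE hornerZ.
    by move: (hz); rewrite -root_prod_XsubC rootE => /eqP ->; rewrite mulr0.
  have := @eig_cycle R m y _ c z y1 ym hM hP rz.
  by rewrite -(rmorph1 (real_complex R)) ltcR.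
rewrite /A tr_gram //.
have hy' : (y.-1 + 1 = y)%N by rewrite addn1 prednK.
set x := a ^+ 2.
have hsq k : a ^+ (2 * k) = x ^+ k by rewrite exprM.
have e2 : \sum_(y.-1 <= k < m.+1) a ^+ (2 * k) / (1 - a ^+ Lb) ^+ 2
    = x ^+ y.-1 * ((\sum_(i < Lb) x ^+ i) / (1 - a ^+ Lb) ^+ 2).
  rewrite -mulr_suml mulrA mulr_sumr; congr (_ * _).
  rewrite -{1}(add0n y.-1) big_addn big_mkord.
  have -> : (m.+1 - y.-1 = Lb)%N by rewrite /Lb; lia.
  by apply: eq_bigr => i _; rewrite hsq exprD mulrC.
rewrite e2 big_mkord.
have x0 : 0 <= x by rewrite /x sqr_ge0.
have x1 : x < 1 by rewrite /x exprn_ilt1.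
apply: (@alg_ineq R x) => //.
- exact: exprn_ge0.
- by rewrite exprn_ilt1 // eL.
- exact: exprn_ge0.
- under eq_bigr do rewrite hsq. rewrite geo; have := exprn_ge0 T x0; lra.
- by under eq_bigr do rewrite hsq; rewrite geo.
- by rewrite geo /x -!exprM mulnC.
Qed.
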